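(* Let $\mathcal{A}\subset\mathbb{Z}^2$ be finite with $\Delta_{\mathcal{A}}$ a polygon, and let $f\colon\mathcal{A}\to\mathbb{R}^2$ be compatible. Then for every edge $\delta$ of $\Delta_{\mathcal{A}}$ there exist $\mathbf{d},\mathbf{d}'\in\delta\cap\mathcal{A}$ and $\mathbf{a}\in\mathcal{A}\setminus\delta$ such that $f(\mathbf{d}),f(\mathbf{d}'),f(\mathbf{a})$ are affinely independent.
   Context: Write $\Delta_{\mathcal{A}}$ for the convex hull of $\mathcal{A}$. An affinely independent triple $p_0,p_1,p_2\in\mathbb{R}^2$ has orientation given by the sign of $\det(p_1-p_0,\,p_2-p_0)$; it is positively oriented if this determinant is positive. An assignment $f\colon\mathcal{A}\to\mathbb{R}^2$ is weakly compatible if both of the following hold: <ol> <li>There exist affinely independent $\mathbf{a}_0,\mathbf{a}_1,\mathbf{a}_2\in\mathcal{A}$ such that $f(\mathbf{a}_0),f(\mathbf{a}_1),f(\mathbf{a}_2)$ are affinely independent.</li> <li>For any affinely independent $\mathbf{a}'_0,\mathbf{a}'_1,\mathbf{a}'_2\in\mathcal{A}$ with the same orientation as $\mathbf{a}_0,\mathbf{a}_1,\mathbf{a}_2$: if $f(\mathbf{a}'_0),f(\mathbf{a}'_1),f(\mathbf{a}'_2)$ are affinely independent, then they have the same orientation as $f(\mathbf{a}_0),f(\mathbf{a}_1),f(\mathbf{a}_2)$.</li> </ol> The assignment $f$ is compatible if it is weakly compatible and no two distinct vertices of $\Delta_{\mathcal{A}}$ have the same image under $f$. *)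

(* Defs.v *)
From HB Require Import structures.
From mathcomp Require Import all_boot all_order all_algebra.
Set Implicit Arguments. Unset Strict Implicit. Unset Printing Implicit Defensive.
Import Order.TTheory GRing.Theory Num.Theory.
Local Open Scope ring_scope.

Section Planar.
Variable R : realFieldType.

Definition pt (x : int * int) : R * R := (x.1%:~R, x.2%:~R).

(* det(p1 - p0, p2 - p0) *)
Definition orient (p0 p1 p2 : R * R) : R :=
  (p1.1 - p0.1) * (p2.2 - p0.2) - (p1.2 - p0.2) * (p2.1 - p0.1).

Definition aff_indep (p0 p1 p2 : R * R) : bool := orient p0 p1 p2 != 0.

Definition dot (l y : R * R) : R := l.1 * y.1 + l.2 * y.2.

Definition in_hull (A : seq (int * int)) (y : R * R) : Prop :=
  exists w : 'I_(size A) -> R,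
    [/\ forall i, 0 <= w i,
        \sum_(i < size A) w i = 1,
        y.1 = \sum_(i < size A) w i * (pt (nth (0, 0) A i)).1 &
        y.2 = \sum_(i < size A) w i * (pt (nth (0, 0) A i)).2].

Definition is_polygon (A : seq (int * int)) : Prop :=
  exists a0 a1 a2, [/\ a0 \in A, a1 \in A, a2 \in A &
                     aff_indep (pt a0) (pt a1) (pt a2)].

Definition is_vertex (A : seq (int * int)) (v : int * int) : Prop :=
  v \in A /\
  exists (l : R * R) (c : R),
    [/\ forall y, in_hull A y -> dot l y <= c,
        dot l (pt v) = c &
        forall y, in_hull A y -> dot l y = c -> y = pt v].

Definition is_edge (A : seq (int * int)) (delta : R * R -> Prop) : Prop :=
  exists (l : R * R) (c : R),
    [/\ l != (0, 0),
        forall y, in_hull A y -> dot l y <= c,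
        forall y, delta y <-> (in_hull A y /\ dot l y = c) &
        exists y1 y2, [/\ delta y1, delta y2 & y1 <> y2]].

Definition weakly_compatible (A : seq (int * int)) (f : int * int -> R * R) : Prop :=
  exists a0 a1 a2,
    [/\ [/\ a0 \in A, a1 \in A & a2 \in A],
        aff_indep (pt a0) (pt a1) (pt a2),
        aff_indep (f a0) (f a1) (f a2) &
        forall b0 b1 b2, b0 \in A -> b1 \in A -> b2 \in A ->
          aff_indep (pt b0) (pt b1) (pt b2) ->
          Num.sg (orient (pt b0) (pt b1) (pt b2)) = Num.sg (orient (pt a0) (pt a1) (pt a2)) ->
          aff_indep (f b0) (f b1) (f b2) ->
          Num.sg (orient (f b0) (f b1) (f b2)) = Num.sg (orient (f a0) (f a1) (f a2))].

Definition compatible (A : seq (int * int)) (f : int * int -> R * R) : Prop :=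
  weakly_compatible A f /\
  forall v w, is_vertex A v -> is_vertex A w -> v <> w -> f v <> f w.

End Planar.

(* Main.v *)
Require Import Defs.
From Stdlib Require Import Classical.
From HB Require Import structures.
From mathcomp Require Import all_boot all_order all_algebra.
From mathcomp Require Import ring lra.
Import Order.TTheory GRing.Theory Num.Theory.
Set Implicit Arguments. Unset Strict Implicit. Unset Printing Implicit Defensive.
Local Open Scope ring_scope.

Section H.
Variable R : realFieldType.
Implicit Types p q x y z l : R * R.

Lemma pair_neq p q : p <> q -> p.1 != q.1 \/ p.2 != q.2.
Proof.
case: p q => [p1 p2] [q1 q2] /= H.
case: (eqVneq p1 q1) => [E1|]; last by left.
case: (eqVneq p2 q2) => [E2|]; last by right.
by exfalso; apply: H; rewrite E1 E2.
Qed.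

Lemma colin p q x y z : p <> q -> orient p q x = 0 -> orient p q y = 0 ->
  orient p q z = 0 -> orient x y z = 0.
Proof.
move=> pq.
pose D (x y : R * R) := (x.1-p.1)*(y.2-p.2) - (x.2-p.2)*(y.1-p.1).
have key : forall x y, orient p q x = 0 -> orient p q y = 0 -> D x y = 0.
  move=> a b ha hb.
  have e1 : D a b * (q.1 - p.1) = orient p q b * (a.1 - p.1) - orient p q a * (b.1 - p.1).
    by rewrite /D /orient; ring.
  have e2 : D a b * (q.2 - p.2) = orient p q b * (a.2 - p.2) - orient p q a * (b.2 - p.2).
    by rewrite /D /orient; ring.
  rewrite ha hb !mul0r subrr in e1 e2.
  case: (pair_neq pq) => H.
    have H' : q.1 - p.1 != 0 by rewrite subr_eq0 eq_sym.
    by move/eqP: e1; rewrite mulf_eq0 (negbTE H') orbF => /eqP.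
  have H' : q.2 - p.2 != 0 by rewrite subr_eq0 eq_sym.
  by move/eqP: e2; rewrite mulf_eq0 (negbTE H') orbF => /eqP.
move=> hx hy hz.
have -> : orient x y z = D y z + D x y - D x z by rewrite /D /orient; ring.
by rewrite (key _ _ hy hz) (key _ _ hx hy) (key _ _ hx hz) addr0 subrr.
Qed.

Lemma line_orient l c p q r : l != (0, 0) -> dot l p = c -> dot l q = c ->
  dot l r = c -> orient p q r = 0.
Proof.
move=> l0 hp hq hr.
have e1 : l.1 * orient p q r = (dot l q - dot l p)*(r.2-p.2) - (dot l r - dot l p)*(q.2-p.2)
  by rewrite /dot /orient; ring.
have e2 : l.2 * orient p q r = (dot l r - dot l p)*(q.1-p.1) - (dot l q - dot l p)*(r.1-p.1)
  by rewrite /dot /orient; ring.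
rewrite hp hq hr subrr !mul0r subrr in e1 e2.
have : l <> (0, 0) by move=> E; rewrite E eqxx in l0.
case/pair_neq => /= H.
  by move/eqP: e1; rewrite mulf_eq0 (negbTE H) => /eqP.
by move/eqP: e2; rewrite mulf_eq0 (negbTE H) => /eqP.
Qed.

Lemma perp l y p : l != (0, 0) -> dot l y = dot l p ->
  dot (- l.2, l.1) y = dot (- l.2, l.1) p -> y = p.
Proof.
move=> l0 h1 h2.
have nz : l.1 ^+ 2 + l.2 ^+ 2 != 0.
  apply/negP => /eqP /eqP; rewrite paddr_eq0 ?sqr_ge0 // !sqrf_eq0 => /andP[/eqP a /eqP b].
  have El : l = (0, 0) by move: a b; case: (l) => ? ? /= -> ->.
  by rewrite El eqxx in l0.
have e1 : (l.1 ^+ 2 + l.2 ^+ 2) * (y.1 - p.1) =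
   l.1 * (dot l y - dot l p) - l.2 * (dot (- l.2, l.1) y - dot (- l.2, l.1) p)
  by rewrite /dot /=; ring.
have e2 : (l.1 ^+ 2 + l.2 ^+ 2) * (y.2 - p.2) =
   l.2 * (dot l y - dot l p) + l.1 * (dot (- l.2, l.1) y - dot (- l.2, l.1) p)
  by rewrite /dot /=; ring.
rewrite h1 h2 !(subrr, mulr0, addr0) in e1 e2.
move/eqP: e1; rewrite mulf_eq0 (negbTE nz) subr_eq0 => /eqP E1.
move/eqP: e2; rewrite mulf_eq0 (negbTE nz) subr_eq0 => /eqP E2.
by move: E1 E2; case: (y) (p) => ? ? [? ?] /= -> ->.
Qed.


Lemma dotE l y : dot l y = l.1 * y.1 + l.2 * y.2. Proof. by []. Qed.

Lemma hull_pt (A : seq (int * int)) a : a \in A -> in_hull A (pt R a).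
Proof.
move=> aA; set j := Ordinal (etrans (index_mem a A) aA).
have S : forall F : 'I_(size A) -> R,
    \sum_(i < size A) ((i : nat) == index a A)%:R * F i = F j.
  move=> F; rewrite (bigD1 j) //= eqxx mul1r big1 ?addr0 // => i ij.
  have -> : ((i : nat) == index a A) = false.
    by apply/negbTE; move: ij; apply: contra => /eqP E; apply/eqP/val_inj.
  by rewrite mul0r.
exists (fun i : 'I_(size A) => ((i : nat) == index a A)%:R); split.
- by move=> i; rewrite ler0n.
- by rewrite -[RHS](S (fun _ => 1)); apply: eq_bigr => i _; rewrite mulr1.
- by rewrite S /= nth_index.
- by rewrite S /= nth_index.
Qed.

Lemma hull_dot (A : seq (int * int)) (w : 'I_(size A) -> R) y l :
  y.1 = \sum_(i < size A) w i * (pt R (nth (0, 0) A i)).1 ->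
  y.2 = \sum_(i < size A) w i * (pt R (nth (0, 0) A i)).2 ->
  dot l y = \sum_(i < size A) w i * dot l (pt R (nth (0, 0) A i)).
Proof.
move=> e1 e2; rewrite dotE e1 e2 !mulr_sumr -big_split /=.
apply: eq_bigr => i _; rewrite dotE /pt /=; ring.
Qed.

Lemma hull_unique (A : seq (int * int)) y l c p :
  in_hull A y -> (forall a, a \in A -> dot l (pt R a) <= c) -> dot l y = c ->
  (forall a, a \in A -> dot l (pt R a) = c -> pt R a = p) -> y = p.
Proof.
move=> [w [w0 w1 e1 e2]] hb hy hu.
have mem : forall i : 'I_(size A), nth (0, 0) A i \in A by move=> i; apply: mem_nth.
have Z : \sum_(i < size A) w i * (c - dot l (pt R (nth (0, 0) A i))) = 0.
  have := hull_dot l e1 e2; rewrite hy => E.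
  rewrite (eq_bigr (fun i => w i * c - w i * dot l (pt R (nth (0, 0) A i)))); last first.
    by move=> i _; rewrite mulrBr.
  by rewrite sumrB -mulr_suml w1 mul1r -E subrr.
have Z' : forall i, w i * (c - dot l (pt R (nth (0, 0) A i))) = 0.
  move=> i; apply: (psumr_eq0P _ Z) => // j _.
  by apply: mulr_ge0 (w0 j) _; rewrite subr_ge0; apply: hb.
have K : forall i : 'I_(size A), pt R (nth (0, 0) A i) = p \/ w i = 0.
  move=> i; case: (eqVneq (w i) 0) => [->|wn]; first by right.
  move/eqP: (Z' i); rewrite mulf_eq0 (negbTE wn) /= subr_eq0 => /eqP E.
  by left; apply: hu (mem i) (esym E).
have K1 : y.1 = p.1.
  rewrite e1 (eq_bigr (fun i => w i * p.1)); first by rewrite -mulr_suml w1 mul1r.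
  by move=> i _; case: (K i) => [->|->]; rewrite ?mul0r.
have K2 : y.2 = p.2.
  rewrite e2 (eq_bigr (fun i => w i * p.2)); first by rewrite -mulr_suml w1 mul1r.
  by move=> i _; case: (K i) => [->|->]; rewrite ?mul0r.
by move: K1 K2; case: (y) (p) => ? ? [? ?] /= -> ->.
Qed.

Lemma hull_le (A : seq (int * int)) l c y :
  (forall a, a \in A -> dot l (pt R a) <= c) -> in_hull A y -> dot l y <= c.
Proof.
move=> hb [w [w0 w1 e1 e2]]; rewrite (hull_dot l e1 e2).
apply: le_trans (_ : \sum_(i < size A) w i * c <= c).
  apply: ler_sum => i _; apply: (ler_wpM2l (w0 i)); apply: hb; exact: mem_nth.
by rewrite -mulr_suml w1 mul1r.
Qed.

Lemma vertexP (A : seq (int * int)) v l c :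
  v \in A -> dot l (pt R v) = c -> (forall a, a \in A -> dot l (pt R a) <= c) ->
  (forall a, a \in A -> dot l (pt R a) = c -> pt R a = pt R v) -> is_vertex R A v.
Proof.
move=> vA hv hb hu; split => //; exists l, c; split => //.
- by move=> y; apply: hull_le.
- by move=> y hy hyc; apply: hull_unique hy hb hyc hu.
Qed.

Lemma sum_ge_term (T : eqType) (F : T -> R) (s : seq T) (e : T) :
  (forall b, b \in s -> 0 <= F b) -> (e : T) \in s -> F (e : T) <= \sum_(y <- s) F y.
Proof.
elim: s => // a s IH H; rewrite in_cons big_cons => /orP [/eqP ->|es].
  by rewrite lerDl big_seq sumr_ge0 // => b bs; apply: H; rewrite in_cons bs orbT.
have H' : forall b, b \in s -> 0 <= F b by move=> b bs; apply: H; rewrite in_cons bs orbT.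
apply: le_trans (IH H' es) _.
by rewrite lerDr; apply: H; rewrite in_cons eqxx.
Qed.

Lemma seq_max (T : eqType) (F : T -> R) (s : seq T) : s != [::] ->
  exists2 v, v \in s & forall a, a \in s -> F a <= F v.
Proof.
elim: s => // a s IH _; case: (eqVneq s [::]) => [->|sn].
  by exists a; rewrite ?mem_seq1 // => b; rewrite mem_seq1 => /eqP ->.
case: (IH sn) => v vs hv.
case: (leP (F a) (F v)) => h.
  exists v; first by rewrite in_cons vs orbT.
  by move=> b; rewrite in_cons => /orP [/eqP ->|]; [|apply: hv].
exists a; first by rewrite in_cons eqxx.
move=> b; rewrite in_cons => /orP [/eqP ->|bs] //.
by apply: le_trans (hv _ bs) (ltW h).
Qed.

Lemma vertex_build (A : seq (int * int)) v l m c :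
  v \in A -> dot l (pt R v) = c -> (forall a, a \in A -> dot l (pt R a) <= c) ->
  (forall a, a \in A -> dot l (pt R a) = c -> dot m (pt R a) <= dot m (pt R v)) ->
  (forall a, a \in A -> dot l (pt R a) = c -> dot m (pt R a) = dot m (pt R v) ->
     pt R a = pt R v) -> is_vertex R A v.
Proof.
move=> vA hv hb hm hu.
pose g a := if dot l (pt R a) < c then
   `|dot m (pt R a) - dot m (pt R v)| / (c - dot l (pt R a)) else 0.
pose K := 1 + \sum_(a <- A) g a.
pose l' := (K * l.1 + m.1, K * l.2 + m.2).
pose c' := K * c + dot m (pt R v).
have dl' : forall p, dot l' p = K * dot l p + dot m p by move=> p; rewrite /dot /=; ring.
have g0 : forall a, 0 <= g a.
  move=> a; rewrite /g; case: ifP => // h.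
  by rewrite divr_ge0 // subr_ge0 ltW.
have claim : forall a, a \in A ->
   dot l' (pt R a) < c' \/ (dot l (pt R a) = c /\ dot m (pt R a) <= dot m (pt R v)).
  move=> a aA; case: (ltgtP (dot l (pt R a)) c) => h.
  - left; rewrite dl' /c'.
    have ga : g a < K by rewrite /K ltr_pwDl // sum_ge_term // => b _.
    have pos : 0 < c - dot l (pt R a) by rewrite subr_gt0.
    have : g a * (c - dot l (pt R a)) < K * (c - dot l (pt R a)) by rewrite ltr_pM2r.
    rewrite /g h divfK ?gt_eqF // => H.
    have := ler_norm (dot m (pt R a) - dot m (pt R v)).
    rewrite mulrBr in H; lra.
  - by have := hb a aA; rewrite leNgt h.
  - by right; split => //; apply: hm.
apply: (@vertexP A v l' c') => //.
- by rewrite dl' hv.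
- move=> a aA; case: (claim a aA) => [/ltW //|[h1 h2]].
  by rewrite dl' h1 /c' lerD2l.
- move=> a aA; case: (claim a aA) => [h|[h1 h2]] E.
    by rewrite E ltxx in h.
  apply: hu => //; move: E; rewrite dl' h1 /c' => /addrI //.
Qed.
End H.

Theorem mainTheorem3 (R : realFieldType) (A : seq (int * int))
    (f : int * int -> R * R) :
  is_polygon R A -> compatible A f ->
  forall delta : R * R -> Prop, is_edge A delta ->
  exists d d' a : int * int,
    [/\ [/\ d \in A, d' \in A & a \in A],
        delta (pt R d), delta (pt R d'), ~ delta (pt R a) &
        aff_indep (f d) (f d') (f a)].
Proof.
move=> Hpoly [[a0 [a1 [a2 [[a0A a1A a2A] ind0 indf0 _]]]] Hvert] delta
  [l [c [l0 Hb Hd [y1 [y2 [d1 d2 y12]]]]]].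
have HbA : forall a, a \in A -> dot l (pt R a) <= c.
  by move=> a aA; apply: Hb; apply: hull_pt.
have Hda : forall a, a \in A -> (delta (pt R a) <-> dot l (pt R a) = c).
  move=> a aA; split => [/Hd [] //|h]; apply/Hd; split => //; exact: hull_pt.
have [y1h y1l] := proj1 (Hd y1) d1.
have [y2h y2l] := proj1 (Hd y2) d2.
pose m : R * R := (- l.2, l.1).
pose S := [seq a <- A | dot l (pt R a) == c].
have memS : forall a, (a \in S) = (a \in A) && (dot l (pt R a) == c).
  by move=> a; rewrite mem_filter andbC.
have Sn : S != [::].
  apply/negP => /eqP S0; apply: y12.
  apply: (hull_unique y1h HbA y1l) => a aA ha.
  have : a \in S by rewrite memS aA ha eqxx.
  by rewrite S0.
case: (seq_max (fun a => dot m (pt R a)) Sn) => v vS hv.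
case: (seq_max (fun a => - dot m (pt R a)) Sn) => w wS hw.
move: (vS) (wS); rewrite !memS => /andP[vA /eqP vl] /andP[wA /eqP wl].
have hv' : forall a, a \in A -> dot l (pt R a) = c -> dot m (pt R a) <= dot m (pt R v).
  by move=> a aA ha; apply: hv; rewrite memS aA ha eqxx.
have hw' : forall a, a \in A -> dot l (pt R a) = c -> dot m (pt R w) <= dot m (pt R a).
  by move=> a aA ha; rewrite -lerN2; apply: hw; rewrite memS aA ha eqxx.
have hpt : forall a b, dot l (pt R a) = dot l (pt R b) ->
    dot m (pt R a) = dot m (pt R b) -> pt R a = pt R b.
  by move=> a b h1 h2; apply: perp l0 h1 h2.
have vw : dot m (pt R v) != dot m (pt R w).
  apply/negP => /eqP E; apply: y12.
  have all : forall a, a \in A -> dot l (pt R a) = c -> pt R a = pt R v.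
    move=> a aA ha; apply: hpt; first by rewrite ha vl.
    by apply/le_anti; rewrite hv' //= E hw'.
  by rewrite (hull_unique y1h HbA y1l all) (hull_unique y2h HbA y2l all).
have vneqw : v <> w by move=> E; rewrite E eqxx in vw.
have Vv : is_vertex R A v.
  apply: (vertex_build (m := m) vA vl HbA hv') => a aA ha E.
  by apply: hpt => //; rewrite ha vl.
have Vw : is_vertex R A w.
  pose m' : R * R := (l.2, - l.1).
  have dm' : forall p, dot m' p = - dot m p by move=> p; rewrite /dot /=; ring.
  apply: (vertex_build (m := m') wA wl HbA).
    by move=> a aA ha; rewrite !dm' lerN2; apply: hw'.
  move=> a aA ha; rewrite !dm' => /oppr_inj E.
  by apply: hpt => //; rewrite ha wl.
have fvw := Hvert v w Vv Vw vneqw.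
have [b [bA bl]] : exists b, b \in A /\ dot l (pt R b) != c.
  case: (eqVneq (dot l (pt R a0)) c) => h0; last by exists a0.
  case: (eqVneq (dot l (pt R a1)) c) => h1; last by exists a1.
  case: (eqVneq (dot l (pt R a2)) c) => h2; last by exists a2.
  by rewrite /aff_indep (line_orient l0 h0 h1 h2) eqxx in ind0.
apply: NNPP => Hno.
have Hcol : forall d d' a, d \in A -> d' \in A -> a \in A ->
    dot l (pt R d) = c -> dot l (pt R d') = c -> dot l (pt R a) != c ->
    orient (f d) (f d') (f a) = 0.
  move=> d d' a dA d'A aA hd hd' ha.
  case: (eqVneq (orient (f d) (f d') (f a)) 0) => // ind; exfalso.
  apply: Hno; exists d, d', a; split => //; try by apply/Hda.
  by move/(Hda a aA) => E; rewrite E eqxx in ha.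
have L : forall x, x \in A -> orient (f v) (f w) (f x) = 0.
  move=> x xA; case: (eqVneq (dot l (pt R x)) c) => hx; last exact: Hcol.
  have e0 := Hcol v w b vA wA bA vl wl bl.
  have e1 := Hcol x v b xA vA bA hx vl bl.
  have e2 := Hcol x w b xA wA bA hx wl bl.
  case: (eqVneq (f b) (f v)) => E.
    rewrite E in e2.
    have -> : orient (f v) (f w) (f x) = - orient (f x) (f w) (f v)
      by rewrite /orient; ring.
    by rewrite e2 oppr0.
  have nE : f v <> f b by move=> h; rewrite h eqxx in E.
  apply: (colin (p := f v) (q := f b)) => //.
  - by rewrite /orient; ring.
  - have -> : orient (f v) (f b) (f w) = - orient (f v) (f w) (f b)
      by rewrite /orient; ring.
    by rewrite e0 oppr0.
  - have -> : orient (f v) (f b) (f x) = orient (f x) (f v) (f b)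
      by rewrite /orient; ring.
    by [].
move: indf0; rewrite /aff_indep.
by rewrite (colin (p := f v) (q := f w) fvw (L _ a0A) (L _ a1A) (L _ a2A)) eqxx.
Qed.
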